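(* In the category $\mathsf{Top}$ of topological spaces and continuous maps, a space is (1) finitely generated with respect to embeddings if, and only if, it is finite; and (2) finitely generated with respect to open embeddings if, and only if, it is compact.
   Context: An embedding is an injective continuous map $m:X\to Y$ such that $X$ carries the initial topology (every open set of $X$ is $m^{-1}(U)$ for some open $U\subseteq Y$); an open embedding is an embedding with open image. For a class $\mathcal{M}$ of monomorphisms in a category $\mathcal{C}$, an object $X$ is finitely generated w.r.t. $\mathcal{M}$ if for every directed diagram $(Z_i)_{i\in I}$ (indexed by a directed poset $I$, i.e. every finite subset has an upper bound) whose connecting morphisms $z_{i,j}:Z_i\to Z_j$ lie in $\mathcal{M}$, with colimit cocone $c_i:Z_i\to Z$ in $\mathcal{C}$, every morphism $f:X\to Z$ factorizes essentially uniquely through some $c_i$: (i) there are $i\in I$ and $g:X\to Z_i$ with $f=c_i\cdot g$, and (ii) if also $g':X\to Z_i$ satisfies $f=c_i\cdot g'$, then some connecting morphism $z_{i,j}$ satisfies $z_{i,j}\cdot g=z_{i,j}\cdot g'$. *)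

(* Defs.v *)
From HB Require Import structures.
From mathcomp Require Import all_boot all_order.
From mathcomp Require Import all_classical all_reals all_analysis.
Import Order.TTheory.
Set Implicit Arguments.
Unset Strict Implicit.
Local Open Scope classical_set_scope.
Local Open Scope order_scope.

Definition embedding (X Y : topologicalType) (m : X -> Y) : Prop :=
  [/\ injective m, continuous m &
      forall A : set X, open A -> exists U : set Y, open U /\ A = m @^-1` U].

Definition open_embedding (X Y : topologicalType) (m : X -> Y) : Prop :=
  embedding m /\ open (range m).

(* a directed poset: every finite subset (in particular the empty one) has an
   upper bound, i.e. nonempty and any two elements have a common upper bound *)
Definition directed (d : Order.disp_t) (I : porderType d) : Prop :=
  (exists i : I, True) /\ forall i j : I, exists k, i <= k /\ j <= k.

(* a functor from the poset I (as a category) to Top *)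
Definition diagram (d : Order.disp_t) (I : porderType d)
  (Z : I -> topologicalType) (z : forall i j : I, i <= j -> Z i -> Z j) : Prop :=
  [/\ forall i j (h : i <= j), continuous (z i j h),
      forall i (h : i <= i), z i i h = id &
      forall i j k (hij : i <= j) (hjk : j <= k) (hik : i <= k),
        z i k hik = z j k hjk \o z i j hij].

Definition diagram_in (M : forall X Y : topologicalType, (X -> Y) -> Prop)
  (d : Order.disp_t) (I : porderType d)
  (Z : I -> topologicalType) (z : forall i j : I, i <= j -> Z i -> Z j) : Prop :=
  forall i j (h : i <= j), M (Z i) (Z j) (z i j h).

Definition is_colimit (d : Order.disp_t) (I : porderType d)
  (Z : I -> topologicalType) (z : forall i j : I, i <= j -> Z i -> Z j)
  (Zc : topologicalType) (c : forall i, Z i -> Zc) : Prop :=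
  [/\ forall i, continuous (c i),
      forall i j (h : i <= j), c j \o z i j h = c i &
      forall (W : topologicalType) (g : forall i, Z i -> W),
        (forall i, continuous (g i)) ->
        (forall i j (h : i <= j), g j \o z i j h = g i) ->
        exists h : Zc -> W,
          [/\ continuous h, (forall i, h \o c i = g i) &
              forall h' : Zc -> W, continuous h' ->
                (forall i, h' \o c i = g i) -> h' = h]].

Definition finitely_generated (M : forall X Y : topologicalType, (X -> Y) -> Prop)
  (X : topologicalType) : Prop :=
  forall (d : Order.disp_t) (I : porderType d)
    (Z : I -> topologicalType) (z : forall i j : I, i <= j -> Z i -> Z j)
    (Zc : topologicalType) (c : forall i, Z i -> Zc),
    directed I -> diagram z -> diagram_in M z -> is_colimit z c ->
    forall f : X -> Zc, continuous f ->
      (exists i (g : X -> Z i), continuous g /\ f = c i \o g) /\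
      (forall i (g g' : X -> Z i), continuous g -> continuous g' ->
         f = c i \o g -> f = c i \o g' ->
         exists j (h : i <= j), z i j h \o g = z i j h \o g').

(* Main.v *)
Require Import Defs.
From HB Require Import structures.
From mathcomp Require Import all_boot all_order finmap.
From mathcomp Require Import all_classical all_reals all_analysis.
Local Open Scope classical_set_scope.
Local Open Scope order_scope.
Import Order.TTheory.

Definition indiscT (T : Type) : Type := T.
HB.instance Definition _ (T : choiceType) := Choice.on (indiscT T).
Definition indisc_op {T : Type} (A : set (indiscT T)) := forall x y, A x -> A y.
Lemma indisc_opT {T : Type} : @indisc_op T setT. Proof. by []. Qed.
Lemma indisc_opI {T : Type} : setI_closed (@indisc_op T).
Proof. by move=> A B hA hB x y [/hA ? /hB ?]; split; eauto. Qed.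
Lemma indisc_op_bigU {T : Type} (I : Type) (f : I -> set (indiscT T)) :
  (forall i, indisc_op (f i)) -> indisc_op (\bigcup_i f i).
Proof. by move=> h x y [i _ fi]; exists i => //; apply: h fi. Qed.
HB.instance Definition _ (T : choiceType) :=
  isOpenTopological.Build (indiscT T) indisc_opT indisc_opI (@indisc_op_bigU T).

Lemma indisc_cont (X : topologicalType) (T : choiceType) (g : X -> indiscT T) : continuous g.
Proof.
apply/continuousP => A oA.
have oA' : forall x y, A x -> A y := oA.
have [[x Ax]|A0] := pselect (exists x, A x).
  have -> : g @^-1` A = setT; last exact: openT.
  by apply/seteqP; split => // y _; apply: oA' Ax.
have -> : g @^-1` A = set0; last exact: open0.
by apply/seteqP; split => y //= Ay; apply: A0; exists (g y).
Qed.

Definition sierp : Type := bool.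
HB.instance Definition _ := Choice.on sierp.
Definition sierp_op (A : set sierp) := A false -> A true.
Lemma sierp_opT : sierp_op setT. Proof. by []. Qed.
Lemma sierp_opI : setI_closed sierp_op.
Proof. by move=> A B hA hB [/hA ? /hB ?]. Qed.
Lemma sierp_op_bigU (I : Type) (f : I -> set sierp) :
  (forall i, sierp_op (f i)) -> sierp_op (\bigcup_i f i).
Proof. by move=> h [i _ fi]; exists i => //; apply: h. Qed.
HB.instance Definition _ := isOpenTopological.Build sierp sierp_opT sierp_opI sierp_op_bigU.

Lemma sierp_cont (T : topologicalType) (g : T -> sierp) :
  open [set x | g x] -> continuous g.
Proof.
move=> og; apply/continuousP => A oA.
have oA' : A false -> A true := oA.
have [Af|Af] := pselect (A false).
  have -> : g @^-1` A = setT.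
    apply/seteqP; split => // x _ /=; case: (g x); [exact: oA' Af|exact: Af].
  exact: openT.
have [At|At] := pselect (A true).
  have -> : g @^-1` A = [set x | g x]; last exact: og.
  by apply/seteqP; split => x /=; case: (g x).
have -> : g @^-1` A = set0; last exact: open0.
by apply/seteqP; split => x //=; case: (g x).
Qed.

Lemma sierp_open_true : open ([set true] : set sierp).
Proof. by move=> /= h. Qed.

Lemma open_of_local (T : topologicalType) (A : set T) :
  (forall x, A x -> exists B, [/\ open B, B x & B `<=` A]) -> open A.
Proof.
move=> h; rewrite openE => x Ax; have [B [oB Bx BA]] := h x Ax.
by rewrite /interior nbhsE /=; exists B => //; split.
Qed.

Definition pt_of {T : Type} (x : T) : Type := T.
HB.instance Definition _ (T : topologicalType) (x : T) := Topological.copy (pt_of x) T.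
HB.instance Definition _ (T : topologicalType) (x : T) := isPointed.Build (pt_of x) x.

Lemma compact_cover' (T : topologicalType) (A : set T) : compact A -> cover_compact A.
Proof.
have [[x0 _]|A0] := pselect (exists x, A x).
  move=> cA; have : @compact (pt_of x0) A by [].
  by rewrite (compact_cover (pt_of x0 : ptopologicalType)).
move=> _ J D f _ hA; exists fset0 => //.
by move=> x Ax; exfalso; apply: A0; exists x.
Qed.

Section AbsColim.
Variables (d : Order.disp_t) (I : porderType d) (Z : I -> topologicalType)
  (z : forall i j : I, i <= j -> Z i -> Z j) (Zc : topologicalType)
  (c : forall i, Z i -> Zc).
Hypotheses (dirI : directed I) (diag : diagram z) (col : is_colimit z c).

Lemma zcomp (i j k : I) (hij : i <= j) (hjk : j <= k) (hik : i <= k) x :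
  z j k hjk (z i j hij x) = z i k hik x.
Proof. by case: diag => _ _ hc; rewrite (hc i j k hij hjk hik). Qed.
Arguments zcomp {i j k}.

Lemma zid (i : I) (h : i <= i) x : z i i h x = x.
Proof. by case: diag => _ hc _; rewrite (hc i h). Qed.

Lemma zcont (i j : I) (h : i <= j) : continuous (z i j h).
Proof. by case: diag. Qed.

Lemma ccomp (i j : I) (h : i <= j) x : c j (z i j h x) = c i x.
Proof. by case: col => _ hc _; rewrite -(hc i j h). Qed.

Lemma ccont (i : I) : continuous (c i).
Proof. by case: col. Qed.

Lemma c_surj (p : Zc) : exists i a, c i a = p.
Proof.
case: col => _ _ univ.
have [h [_ hc hu]] := univ (indiscT bool) (fun k _ => true)
  (fun k => @indisc_cont _ _ _) (fun _ _ _ => erefl).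
have e1 := hu (fun _ => true) (@indisc_cont _ _ _) (fun _ => erefl).
have e2 := hu (fun q => `[< exists i a, c i a = q >]) (@indisc_cont _ _ _).
have : (fun q => `[< exists i a, c i a = q >]) = h.
  apply: e2 => k; apply/funext => a /=; apply/asboolP; by exists k, a.
rewrite -e1 => /(congr1 (fun F => F p)) /= H.
by apply/asboolP; rewrite H.
Qed.

Lemma upper2 (i j : I) : exists k, i <= k /\ j <= k.
Proof. by case: dirI => _; apply. Qed.

Hypothesis emb : diagram_in embedding z.

Lemma c_inj (i : I) : injective (c i).
Proof.
move=> a b eab.
case: col => _ _ univ.
pose g k (x : Z k) : indiscT bool :=
  `[< exists m (hi : i <= m) (hk : k <= m), z k m hk x = z i m hi a >].
have gc : forall k j (h : k <= j), g j \o z k j h = g k.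
  move=> k j h; apply/funext => x /=; apply/idP/idP => /asboolP.
    move=> [m [hi [hj e]]]; apply/asboolP; exists m, hi, (le_trans h hj).
    by rewrite -e (zcomp h hj (le_trans h hj)).
  move=> [m [hi [hk e]]]; have [m' [hm hj]] := upper2 m j.
  apply/asboolP; exists m', (le_trans hi hm), hj.
  by rewrite (zcomp h hj (le_trans hk hm)) -(zcomp hk hm (le_trans hk hm)) e (zcomp hi hm (le_trans hi hm)).
have [h [_ hc _]] := univ (indiscT bool) g (fun k => @indisc_cont _ _ _) gc.
have hb : h (c i b) = g i b := congr1 (fun F => F b) (hc i).
have ha : h (c i a) = g i a := congr1 (fun F => F a) (hc i).
have : g i b.
  by rewrite -hb -eab ha; apply/asboolP; exists i, (lexx i), (lexx i).
move=> /asboolP [m [hi [hk e]]].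
have := emb _ _ hk; case=> injz _ _; apply: injz.
by rewrite e (bool_irrelevance hk hi).
Qed.

Lemma c_emb (i : I) (V : set (Z i)) : open V -> exists U, open U /\ V = c i @^-1` U.
Proof.
move=> oV; case: col => _ _ univ.
pose P k (x : Z k) := exists m (hi : i <= m) (hk : k <= m) (Q : set (Z m)),
  [/\ open Q, V = z i m hi @^-1` Q & Q (z k m hk x)].
pose g k (x : Z k) : sierp := `[< P k x >].
have gcont : forall k, continuous (g k).
  move=> k; apply: sierp_cont; apply: open_of_local => x /= /asboolP.
  move=> [m [hi [hk [Q [oO VO Ox]]]]].
  exists (z k m hk @^-1` Q); split => //.
    exact: (proj1 (continuousP _) (zcont _ _ hk) _ oO).
  by move=> y /= Oy; apply/asboolP; exists m, hi, hk, Q.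
have gc : forall k j (h : k <= j), g j \o z k j h = g k.
  move=> k j h; apply/funext => x /=; apply/idP/idP => /asboolP.
    move=> [m [hi [hj [Q [oO VO Ox]]]]]; apply/asboolP; exists m, hi, (le_trans h hj), Q.
    by split => //; rewrite -(zcomp h hj).
  move=> [m [hi [hk [Q [oO VO Ox]]]]]; have [m' [hm hj]] := upper2 m j.
  have [_ _ embO] := emb _ _ hm.
  have [Q' [oQ' eO]] := embO Q oO.
  apply/asboolP; exists m', (le_trans hi hm), hj, Q'; split => //.
    rewrite VO eO; apply/seteqP; split => y /=; by rewrite (zcomp hi hm (le_trans hi hm)).
  rewrite (zcomp h hj (le_trans hk hm)) -(zcomp hk hm (le_trans hk hm)).
  by move: Ox; rewrite eO.
have [h [hcont hc _]] := univ sierp g gcont gc.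
exists (h @^-1` [set true]); split.
  exact: (proj1 (continuousP _) hcont _ sierp_open_true).
apply/seteqP; split => x /=.
  move=> Vx; rewrite -[h (c i x)]/((h \o c i) x) hc; apply/asboolP.
  by exists i, (lexx i), (lexx i), V; split => //; [apply/seteqP; split => y /=; rewrite zid | rewrite zid].
rewrite -[h (c i x)]/((h \o c i) x) hc => /asboolP [m [hi [hk [Q [oO VO Ox]]]]].
by rewrite VO /= (bool_irrelevance hi hk).
Qed.

Lemma seq_bound (s : seq I) : exists i : I, forall k, k \in s -> k <= i.
Proof.
elim: s => [|a s [i hi]].
  by case: dirI => -[i _] _; exists i.
have [m [ham him]] := upper2 a i.
exists m => k; rewrite inE => /orP [/eqP -> //|/hi ki].
exact: le_trans ki him.
Qed.

Lemma fg_concl (X : topologicalType) (f : X -> Zc) (i : I) :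
  continuous f -> (forall x, exists a, c i a = f x) ->
  (exists i (g : X -> Z i), continuous g /\ f = c i \o g) /\
  (forall i (g g' : X -> Z i), continuous g -> continuous g' ->
     f = c i \o g -> f = c i \o g' ->
     exists j (h : i <= j), z i j h \o g = z i j h \o g').
Proof.
move=> fc hf; split.
  pose g x := projT1 (cid (hf x)).
  have hg x : c i (g x) = f x := projT2 (cid (hf x)).
  exists i, g; split; last by apply/funext => x /=; rewrite hg.
  apply/continuousP => V oV.
  have [U [oU ->]] := c_emb i V oV.
  have -> : g @^-1` (c i @^-1` U) = f @^-1` U.
    by apply/seteqP; split => x /=; rewrite hg.
  exact: (proj1 (continuousP _) fc _ oU).
move=> j g g' _ _ e1 e2; exists j, (lexx j).
apply/funext => x /=; rewrite !zid; apply: (c_inj j).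
by have := congr1 (fun F => F x) e1; have := congr1 (fun F => F x) e2 => /= <- <-.
Qed.

Lemma fg_finite (X : topologicalType) (f : X -> Zc) : finite_set [set: X] ->
  exists i, forall x, exists a, c i a = f x.
Proof.
move=> /finite_fsetP [B hB].
suff [i hi] : exists i, forall x, x \in (B : seq X) -> exists a, c i a = f x.
  exists i => x; apply: hi.
  have : [set` B] x by rewrite -hB.
  by [].
elim: (B : seq X) => [|x s [i hi]].
  by case: dirI => -[i _] _; exists i.
have [k [a ha]] := c_surj (f x).
have [m [hkm him]] := upper2 k i.
exists m => y; rewrite inE => /orP [/eqP ->|/hi [b hb]].
  by exists (z k m hkm a); rewrite ccomp.
by exists (z i m him b); rewrite ccomp.
Qed.

Hypothesis oemb : diagram_in open_embedding z.

Lemma c_open_range (k : I) : open (range (c k)).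
Proof.
case: (col) => _ _ univ.
pose P j (x : Z j) := exists m (hk : k <= m) (hj : j <= m) y, z k m hk y = z j m hj x.
pose g j (x : Z j) : sierp := `[< P j x >].
have gcont : forall j, continuous (g j).
  move=> j; apply: sierp_cont; apply: open_of_local => x /= /asboolP.
  move=> [m [hk [hj [y e]]]].
  exists (z j m hj @^-1` range (z k m hk)); split => //.
  - have [_ oR] := oemb _ _ hk.
    exact: (proj1 (continuousP _) (zcont _ _ hj) _ oR).
  - by exists y.
  by move=> x' /= [y' _ e']; apply/asboolP; exists m, hk, hj, y'.
have gc : forall i j (h : i <= j), g j \o z i j h = g i.
  move=> i j h; apply/funext => x /=; apply/idP/idP => /asboolP.
    move=> [m [hk [hj [y e]]]]; apply/asboolP; exists m, hk, (le_trans h hj), y.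
    by rewrite e (zcomp h hj (le_trans h hj)).
  move=> [m [hk [hi [y e]]]]; have [m' [hm hj]] := upper2 m j.
  apply/asboolP; exists m', (le_trans hk hm), hj, y.
  rewrite (zcomp h hj (le_trans hi hm)) -(zcomp hi hm (le_trans hi hm)) -e.
  by rewrite (zcomp hk hm (le_trans hk hm)).
have [h [hcont hc _]] := univ sierp g gcont gc.
have -> : range (c k) = h @^-1` [set true].
  apply/seteqP; split => p /=.
    move=> [y _ <-]; rewrite -[h (c k y)]/((h \o c k) y) hc; apply/asboolP.
    by exists k, (lexx k), (lexx k), y.
  have [j [x <-]] := c_surj p.
  rewrite -[h (c j x)]/((h \o c j) x) hc => /asboolP [m [hk [hj [y e]]]].
  by exists y => //; rewrite -(ccomp _ _ hk) e ccomp.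
exact: (proj1 (continuousP _) hcont _ sierp_open_true).
Qed.

Lemma fg_compact (X : topologicalType) (f : X -> Zc) : continuous f -> compact [set: X] ->
  exists i, forall x, exists a, c i a = f x.
Proof.
move=> fc cX.
have cX' := continuous_compact (continuous_subspaceT fc) cX.
have cc := compact_cover' _ _ cX'.
have := cc I setT (fun k => range (c k)) (fun k _ => c_open_range k).
case.
  move=> _ [x _ <-]; have [k [a ha]] := c_surj (f x).
  by exists k => //; exists a.
move=> D' _ hD; have [i hi] := seq_bound D'.
exists i => x; have [k /= kD [a _ ha]] := hD (f x) (ex_intro2 _ _ x Logic.I erefl).
by exists (z k i (hi k kD) a); rewrite ccomp.
Qed.

End AbsColim.

Section UnionColim.
Variables (Y : topologicalType) (d : Order.disp_t) (J : porderType d) (U : J -> set Y).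
Hypotheses (dirJ : directed J) (mono : forall i j : J, i <= j -> U i `<=` U j)
  (cov : forall y, exists j, U j y)
  (final : forall O : set Y, (forall j, open (@set_val Y (U j) @^-1` O)) -> open O).

Definition ZU (j : J) : topologicalType := set_type (U j).
Definition zU (i j : J) (h : i <= j) (x : ZU i) : ZU j :=
  SigSub (mem_set (mono _ _ h _ (set_mem (valP x)))).
Arguments zU [i j].

Lemma zU_val (i j : J) (h : i <= j) x : set_val (zU h x) = set_val x.
Proof. by []. Qed.

Lemma ZU_inj (j : J) (x y : ZU j) : set_val x = set_val y -> x = y.
Proof. by move=> e; apply: val_inj. Qed.

Lemma ZU_open (j : J) (B : set Y) : open B -> open (@set_val Y (U j) @^-1` B).
Proof. by move=> oB; exists B. Qed.

Lemma ZU_openE (j : J) (A : set (ZU j)) : open A -> exists2 B, open B & A = @set_val Y (U j) @^-1` B.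
Proof. by case=> B oB <-; exists B. Qed.

Lemma val_cont (j : J) : continuous (@set_val Y (U j) : ZU j -> Y).
Proof. by apply/continuousP => B oB; exact: ZU_open. Qed.

Lemma zU_cont (i j : J) (h : i <= j) : continuous (zU h).
Proof.
apply/continuousP => A /ZU_openE [B oB ->].
have -> : zU h @^-1` (set_val @^-1` B) = @set_val Y (U i) @^-1` B by [].
exact: ZU_open.
Qed.

Lemma zU_diagram : diagram zU.
Proof.
split.
- exact: zU_cont.
- by move=> i h; apply/funext => x; apply: ZU_inj.
- by move=> i j k hij hjk hik; apply/funext => x; apply: ZU_inj.
Qed.

Lemma zU_emb : diagram_in embedding zU.
Proof.
move=> i j h; split.
- by move=> x y /(congr1 set_val) e; apply: ZU_inj.
- exact: zU_cont.
- move=> A /ZU_openE [B oB ->]; exists (@set_val Y (U j) @^-1` B); split => //.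
  exact: ZU_open.
Qed.

Lemma zU_oemb : (forall j, open (U j)) -> diagram_in open_embedding zU.
Proof.
move=> oU i j h; split; first exact: zU_emb.
have -> : range (zU h) = @set_val Y (U j) @^-1` (U i); last exact: ZU_open.
apply/seteqP; split => y /=.
  by move=> [x _ <-]; rewrite zU_val; exact: (set_mem (valP x)).
move=> Uy; exists (SigSub (mem_set Uy)) => //; exact: ZU_inj.
Qed.

Lemma zU_colim : is_colimit zU (fun j => @set_val Y (U j) : ZU j -> Y).
Proof.
split.
- exact: val_cont.
- by move=> i j h; apply/funext.
move=> W g gc gcomp.
have gval : forall i j (x : ZU i) (y : ZU j), set_val x = set_val y -> g i x = g j y.
  move=> i j x y e.
  have [k [hik hjk]] : exists k, i <= k /\ j <= k.
    by case: dirJ => _; apply.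
  rewrite -(gcomp i k hik) -(gcomp j k hjk) /=; congr (g k _); exact: ZU_inj.
pose jy y := projT1 (cid (cov y)).
have Ujy y : U (jy y) y := projT2 (cid (cov y)).
pose h y := g (jy y) (SigSub (mem_set (Ujy y))).
have hc : forall i, h \o set_val = g i.
  by move=> i; apply/funext => x /=; apply: gval.
exists h; split => //.
- apply/continuousP => O oO; apply: final => j.
  have -> : @set_val Y (U j) @^-1` (h @^-1` O) = g j @^-1` O by rewrite -(hc j).
  exact: (proj1 (continuousP _) (gc j) _ oO).
- move=> h' _ hc'; apply/funext => y.
  have := congr1 (fun F => F (SigSub (mem_set (Ujy y)))) (hc' (jy y)).
  by rewrite /h /= => ->.
Qed.

End UnionColim.

Definition fsx (T : choiceType) : Type := {fset T}.
HB.instance Definition _ (T : choiceType) := Choice.on (fsx T).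
Lemma fsx_anti (T : choiceType) : antisymmetric (fun A B : fsx T => fsubset A B).
Proof. by move=> A B /andP [h1 h2]; apply/eqP; rewrite eqEfsubset h1 h2. Qed.
Lemma fsx_trans (T : choiceType) : transitive (fun A B : fsx T => fsubset A B).
Proof. by move=> B A C h1 h2; apply: fsubset_trans h1 h2. Qed.
HB.instance Definition _ (T : choiceType) :=
  Order.Le_isPOrder.Build (Order.Disp tt tt) (fsx T) (@fsubset_refl T) (@fsx_anti T) (@fsx_trans T).

Lemma fsx_directed (T : choiceType) : directed (fsx T).
Proof.
split; first by exists (fset0 : fsx T).
move=> A B; exists (fsetU A B : fsx T); split.
  exact: fsubsetUl.
exact: fsubsetUr.
Qed.


Lemma fg_emb_finite (X : topologicalType) :
  finitely_generated embedding X -> finite_set [set: X].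
Proof.
move=> fg.
pose Y : topologicalType := indiscT X.
pose U (A : fsx X) : set Y := [set x | x \in A].
have mono : forall i j : fsx X, i <= j -> U i `<=` U j.
  by move=> i j h x /= xi; apply: (fsubsetP h).
have cov : forall y : Y, exists j : fsx X, U j y.
  by move=> y; exists ([fset y]%fset : fsx X); rewrite /U /= inE.
have final : forall O : set Y, (forall j, open (@set_val Y (U j) @^-1` O)) -> open O.
  move=> O hO; suff hh : indisc_op (O : set (indiscT X)) by exact: hh.
  move=> x y Ox.
  have [B oB eB] := @ZU_openE _ _ _ U _ _ (hO ([fset x; y]%fset : fsx X)).
  have oB' : forall a b, B a -> B b := oB.
  have Ux : U ([fset x; y]%fset : fsx X) x by rewrite /U /= !inE eqxx.
  have Uy : U ([fset x; y]%fset : fsx X) y by rewrite /U /= !inE eqxx orbT.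
  have : (@set_val Y (U ([fset x; y]%fset : fsx X)) @^-1` O) (SigSub (mem_set Ux)) by [].
  rewrite eB /= => /(oB' _ y) By.
  have : (@set_val Y (U ([fset x; y]%fset : fsx X)) @^-1` B) (SigSub (mem_set Uy)) by [].
  by rewrite -eB.
have [[i [g [_ hg]]] _] := fg _ (fsx X) (ZU Y _ _ U) (zU Y _ _ U mono) Y
  (fun j => set_val) (fsx_directed X) (zU_diagram _ _ _ _ _) (zU_emb _ _ _ _ _)
  (zU_colim _ _ _ _ (fsx_directed X) mono cov final) (fun x : X => (x : Y)) (@indisc_cont _ _ _).
apply: (sub_finite_set _ (finite_fset i)) => x _.
have := congr1 (fun F => F x) hg => /= ->.
exact: (set_mem (valP (g x))).
Qed.

Lemma cover_compact' (T : topologicalType) (A : set T) : cover_compact A -> compact A.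
Proof.
have [[x0 _]|A0] := pselect (exists x, A x).
  move=> cA; suff : @compact (pt_of x0) A by [].
  by rewrite (compact_cover (pt_of x0 : ptopologicalType)).
have -> : A = set0 by apply/seteqP; split => // x Ax; apply: A0; exists x.
by move=> _; exact: compact0.
Qed.

Lemma fg_oemb_compact (X : topologicalType) :
  finitely_generated open_embedding X -> compact [set: X].
Proof.
move=> fg; apply: cover_compact' => Ic D fam fop hcov.
pose U (A : fsx Ic) : set X := \bigcup_(i in [set i | i \in A /\ D i]) fam i.
have oU : forall j, open (U j).
  by move=> j; apply: bigcup_open => i [_ Di]; exact: fop.
have mono : forall i j : fsx Ic, i <= j -> U i `<=` U j.
  by move=> i j h x [k [ki Dk] fx]; exists k => //; split => //; apply: (fsubsetP h).
have cov1 : forall y, exists k, D k /\ fam k y.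
  by move=> y; have [k Dk fy] := hcov y Logic.I; exists k.
have Uk : forall k y, D k -> fam k y -> U ([fset k]%fset : fsx Ic) y.
  by move=> k y Dk fy; exists k => //; split => //; rewrite inE.
have cov : forall y : X, exists j : fsx Ic, U j y.
  by move=> y; have [k [Dk fy]] := cov1 y; exists ([fset k]%fset : fsx Ic); apply: Uk.
have final : forall O : set X, (forall j, open (@set_val X (U j) @^-1` O)) -> open O.
  move=> O hO; apply: open_of_local => x Ox.
  have [k [Dk fx]] := cov1 x.
  have [B oB eB] := @ZU_openE _ _ _ U _ _ (hO ([fset k]%fset : fsx Ic)).
  exists (B `&` fam k); split.
  - by apply: openI => //; exact: fop.
  - split => //.
    have : (@set_val X (U ([fset k]%fset : fsx Ic)) @^-1` O) (SigSub (mem_set (Uk _ _ Dk fx))) by [].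
    by rewrite eB.
  - move=> y [By fy].
    have : (@set_val X (U ([fset k]%fset : fsx Ic)) @^-1` B) (SigSub (mem_set (Uk _ _ Dk fy))) by [].
    by rewrite -eB.
have [[i [g [_ hg]]] _] := fg _ (fsx Ic) (ZU X _ _ U) (zU X _ _ U mono) X
  (fun j => set_val) (fsx_directed Ic) (zU_diagram _ _ _ _ _) (zU_oemb _ _ _ _ _ oU)
  (zU_colim _ _ _ _ (fsx_directed Ic) mono cov final) (fun x : X => x) (fun x => cvg_id).
exists [fset k in (i : {fset Ic}) | `[< D k >]]%fset.
  by move=> k; rewrite !inE => /andP [_ /asboolP Dk]; rewrite ?inE; try apply: mem_set.
move=> x _.
have := congr1 (fun F => F x) hg => /= ->.
have [k [ki Dk] fk] := set_mem (valP (g x)).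
by exists k => //=; rewrite !inE ki; apply/asboolP.
Qed.

Theorem theorem3p3 (X : topologicalType) :
  (finitely_generated embedding X <-> finite_set [set: X]) /\
  (finitely_generated open_embedding X <-> compact [set: X]).
Proof.
split; split.
- exact: fg_emb_finite.
- move=> fX d I Z z Zc c dirI diag emb col f fc.
  have [i hi] := @fg_finite _ _ _ _ _ _ dirI col _ f fX.
  exact: (@fg_concl _ _ _ _ _ _ dirI diag col emb _ f i fc hi).
- exact: fg_oemb_compact.
- move=> cX d I Z z Zc c dirI diag oemb col f fc.
  have emb : diagram_in embedding z by move=> i j h; case: (oemb i j h).
  have [i hi] := @fg_compact _ _ _ _ _ _ dirI diag col oemb _ f fc cX.
  exact: (@fg_concl _ _ _ _ _ _ dirI diag col emb _ f i fc hi).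
Qed.
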